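(* Let $M$ be a modular-magic Sudoku board. For each $j\in\{0,3,6\}$, consider the three blocks of $M$ whose center entry is $j$. Then among the three off-diagonal sets of these three blocks, at least two are equal.
   Context: A Sudoku board is a $9\times 9$ array with entries from $\{0,1,\dots,8\}$ such that every row, every column, and every one of the nine $3\times 3$ blocks (rows $3a+1,\dots,3a+3$, columns $3b+1,\dots,3b+3$, $a,b\in\{0,1,2\}$) contains each symbol exactly once. Within a block, a mini-row, mini-column, or mini-diagonal is a row, column, or one of the two diagonals of that $3\times 3$ block. A modular-magic Sudoku board is a Sudoku board in which, for every block, the sum of the entries of each mini-row, each mini-column and each of the two mini-diagonals is divisible by $9$. In every block of a modular-magic board, one of the two mini-diagonals has entry set $\{0,3,6\}$, and for each $j\in\{0,3,6\}$ exactly three blocks have center entry $j$. The off-diagonal set of a block is the set of the two corner entries of the mini-diagonal whose entries are not from $\{0,3,6\}$. *)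

(* Defs.v *)
From mathcomp Require Import all_boot.
Set Implicit Arguments. Unset Strict Implicit. Unset Printing Implicit Defensive.

(* A 9x9 board: rows/columns indexed by 'I_9 (row r = paper's row r+1),
   entries in {0,...,8} represented by 'I_9. *)
Definition board := 'I_9 -> 'I_9 -> 'I_9.

Definition gidx (a i : 'I_3) : 'I_9 := inord (3 * a + i).

Definition bentry (M : board) (a b i j : 'I_3) : 'I_9 := M (gidx a i) (gidx b j).

Definition is_sudoku (M : board) : Prop :=
  (forall (r : 'I_9) (s : 'I_9), #|[set c : 'I_9 | M r c == s]| = 1) /\
  (forall (c : 'I_9) (s : 'I_9), #|[set r : 'I_9 | M r c == s]| = 1) /\
  (forall (a b : 'I_3) (s : 'I_9),
      #|[set p : 'I_3 * 'I_3 | bentry M a b p.1 p.2 == s]| = 1).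

Definition i0 : 'I_3 := inord 0.
Definition i1 : 'I_3 := inord 1.
Definition i2 : 'I_3 := inord 2.

Definition sum3 (M : board) (a b : 'I_3) (c : 'I_3 -> 'I_3 * 'I_3) : nat :=
  \sum_(k < 3) (bentry M a b (c k).1 (c k).2 : nat).

Definition is_modular_magic (M : board) : Prop :=
  is_sudoku M /\
  forall a b : 'I_3,
    (forall i : 'I_3, 9 %| sum3 M a b (fun k => (i, k))) /\
    (forall j : 'I_3, 9 %| sum3 M a b (fun k => (k, j))) /\
    9 %| sum3 M a b (fun k => (k, k)) /\
    9 %| sum3 M a b (fun k => (k, rev_ord k)).

Definition in036 (x : 'I_9) : bool := (x : nat) \in [:: 0; 3; 6].

Definition center (M : board) (a b : 'I_3) : 'I_9 := bentry M a b i1 i1.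

(* The off-diagonal set of block (a,b): the two corner entries of the
   mini-diagonal whose entries are not (all) from {0,3,6}. *)
Definition offdiag (M : board) (a b : 'I_3) : {set 'I_9} :=
  if [&& in036 (bentry M a b i0 i0), in036 (bentry M a b i1 i1)
       & in036 (bentry M a b i2 i2)]
  then [set bentry M a b i0 i2; bentry M a b i2 i0]
  else [set bentry M a b i0 i0; bentry M a b i2 i2].

(* Main.v *)
Require Import Defs.
From mathcomp Require Import all_boot.
From mathcomp Require Import zify.

Definition lab (c x : nat) : nat :=
  match c, x with
  | 0, (1|8) => 0 | 0, (2|7) => 1 | 0, (4|5) => 2
  | 3, (2|4) => 0 | 3, (1|5) => 1 | 3, (7|8) => 2
  | 6, (5|7) => 0 | 6, (4|8) => 1 | 6, (1|2) => 2
  | _, _ => 0 end.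

Definition pp (c d : nat) : nat * nat :=
  match c, d with
  | 0, 0 => (1, 8) | 0, 1 => (2, 7) | 0, _ => (4, 5)
  | 3, 0 => (2, 4) | 3, 1 => (1, 5) | 3, _ => (7, 8)
  | _, 0 => (5, 7) | _, 1 => (4, 8) | _, _ => (1, 2) end.

Definition in036n (x : nat) : bool := x \in [:: 0; 3; 6].
Definition neg9 (x y : nat) : nat := (18 - x - y) %% 9.

Definition pmatch c d (u v : nat) :=
  ((u == (pp c d).1) && (v == (pp c d).2)) || ((u == (pp c d).2) && (v == (pp c d).1)).

Definition blk_ok (x00 x01 x02 x10 x11 x12 x20 x21 x22 : nat) : bool :=
  [&& in036n x11, ~~ in036n x10, ~~ in036n x01, lab x11 x10 != lab x11 x01 &
     if [&& in036n x00, in036n x11 & in036n x22]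
     then [&& lab x11 x02 != lab x11 x10, lab x11 x02 != lab x11 x01
              & pmatch x11 (lab x11 x02) x02 x20]
     else [&& lab x11 x00 != lab x11 x10, lab x11 x00 != lab x11 x01
              & pmatch x11 (lab x11 x00) x00 x22]].

Definition blk_impl (x00 x01 x02 x10 x11 x12 x20 x21 x22 : nat) : bool :=
  [&& uniq [:: x00; x01; x02; x10; x11; x12; x20; x21; x22],
      9 %| x20 + x21 + x22, 9 %| x00 + x11 + x22 & 9 %| x02 + x11 + x20]
  ==> blk_ok x00 x01 x02 x10 x11 x12 x20 x21 x22.

Definition blk_pred (x00 x01 x10 x11 : nat) : bool :=
  blk_impl x00 x01 (neg9 x00 x01) x10 x11 (neg9 x10 x11) (neg9 x00 x10)
    (neg9 x01 x11) (neg9 (neg9 x00 x01) (neg9 x10 x11)).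

Definition I9 := iota 0 9.
Definition I3 := iota 0 3.

Lemma blk_check : all (fun x00 => all (fun x01 => all (fun x10 => all (fun x11 =>
  blk_pred x00 x01 x10 x11) I9) I9) I9) I9.
Proof. vm_compute. reflexivity. Qed.

Definition row_pred (x y x' y' : nat) : bool :=
  [&& in036n y, in036n y', ~~ in036n x, ~~ in036n x' &
      uniq [:: x; y; neg9 x y; x'; y'; neg9 x' y']] ==> (lab y x == lab y' x').

Lemma row_check : all (fun x => all (fun y => all (fun x' => all (fun y' =>
  row_pred x y x' y') I9) I9) I9) I9.
Proof. vm_compute. reflexivity. Qed.

Definition fin_pred (r1 r2 r3 g1 g2 g3 d1 d2 d3 : nat) : bool :=
  [&& r1 != g1, r1 != g2, r1 != g3, r2 != g1, r2 != g2, r2 != g3,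
      r3 != g1, r3 != g2, r3 != g3, d1 != r1, d1 != g1, d2 != r2, d2 != g2,
      d3 != r3 & d3 != g3] ==> [|| d1 == d2, d1 == d3 | d2 == d3].

Lemma final_check : all (fun r1 => all (fun r2 => all (fun r3 =>
  all (fun g1 => all (fun g2 => all (fun g3 =>
  all (fun d1 => all (fun d2 => all (fun d3 =>
  fin_pred r1 r2 r3 g1 g2 g3 d1 d2 d3) I3) I3) I3) I3) I3) I3) I3) I3) I3.
Proof. vm_compute. reflexivity. Qed.

Lemma uniq6 (m n : nat) : m != n ->
  uniq [:: 3*m+0; 3*m+1; 3*m+2; 3*n+0; 3*n+1; 3*n+2].
Proof. rewrite /= !inE. lia. Qed.

Lemma vi0 : (i0 : nat) = 0. Proof. by rewrite /i0 inordK. Qed.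
Lemma vi1 : (i1 : nat) = 1. Proof. by rewrite /i1 inordK. Qed.
Lemma vi2 : (i2 : nat) = 2. Proof. by rewrite /i2 inordK. Qed.

Lemma gidxE a i : (gidx a i : nat) = 3 * a + i.
Proof. rewrite /gidx inordK //; have := ltn_ord a; have := ltn_ord i; lia. Qed.

Lemma gidx_inj a i a' i' : gidx a i = gidx a' i' -> a = a' /\ i = i'.
Proof.
move/(congr1 (@nat_of_ord 9)); rewrite !gidxE => h.
have := ltn_ord i; have := ltn_ord i' => hi hi'.
split; apply: ord_inj; lia.
Qed.

Lemma rev0 : rev_ord i0 = i2. Proof. apply: val_inj; by rewrite /= vi0 vi2. Qed.
Lemma rev1 : rev_ord i1 = i1. Proof. apply: val_inj; by rewrite /= vi1. Qed.
Lemma rev2 : rev_ord i2 = i0. Proof. apply: val_inj; by rewrite /= vi0 vi2. Qed.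

Lemma card1_inj (T : finType) (f : T -> 'I_9) s :
  #|[set x | f x == s]| = 1 -> forall x y, f x = s -> f y = s -> x = y.
Proof.
move=> /eqP /cards1P [z Hz] x y hx hy.
have : x \in [set x | f x == s] by rewrite inE hx.
have : y \in [set x | f x == s] by rewrite inE hy.
by rewrite Hz !inE => /eqP -> /eqP ->.
Qed.

Lemma sum3E M a b c : sum3 M a b c =
  bentry M a b (c i0).1 (c i0).2 + bentry M a b (c i1).1 (c i1).2
  + bentry M a b (c i2).1 (c i2).2.
Proof.
rewrite /sum3 !big_ord_recr big_ord0 /=.
have -> : (widen_ord (leqnSn 2) (widen_ord (leqnSn 1) ord_max) : 'I_3) = i0.
  by apply: val_inj; rewrite /= vi0.
have -> : (widen_ord (leqnSn 2) ord_max : 'I_3) = i1.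
  by apply: val_inj; rewrite /= vi1.
have -> : (ord_max : 'I_3) = i2.
  by apply: val_inj; rewrite /= vi2.
by [].
Qed.

Lemma negP (x y z : 'I_9) : 9 %| x + y + z -> (z : nat) = neg9 x y.
Proof.
have := ltn_ord x; have := ltn_ord y; have := ltn_ord z; rewrite /neg9. lia.
Qed.

Lemma mem9 (x : 'I_9) : (x : nat) \in I9.
Proof. by rewrite mem_iota add0n ltn_ord. Qed.

Lemma mem3 (x : nat) : x < 3 -> x \in I3.
Proof. by rewrite mem_iota add0n. Qed.

Lemma lab_lt3 c x : lab c x < 3.
Proof. rewrite /lab; do 7?[case: c => [|c] //]; do 9?[case: x => [|x] //]. Qed.

Lemma pmatchP c d (u v : 'I_9) : pmatch c d u v ->
  [set u; v] = [set inord (pp c d).1; inord (pp c d).2] :> {set 'I_9}.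
Proof.
case/orP => /andP [/eqP hu /eqP hv].
  by rewrite -hu -hv !inord_val.
by rewrite -hu -hv !inord_val setUC.
Qed.

Definition rl M a b := lab (center M a b) (bentry M a b i1 i0).
Definition gl M a b := lab (center M a b) (bentry M a b i0 i1).

Lemma blockP M a b : is_modular_magic M ->
  exists d, [/\ in036 (center M a b), ~~ in036 (bentry M a b i1 i0)
    && ~~ in036 (bentry M a b i0 i1), rl M a b != gl M a b,
    [&& d < 3, d != rl M a b & d != gl M a b] &
    offdiag M a b = [set inord (pp (center M a b) d).1; inord (pp (center M a b) d).2]].
Proof.
move=> [[_ [_ Hb]] /(_ a b) [Hr [Hc [Hd Ha]]]].
have inj : forall p q : 'I_3 * 'I_3, bentry M a b p.1 p.2 = bentry M a b q.1 q.2 -> p = q.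
  move=> p q h.
  by apply: (@card1_inj _ (fun p : 'I_3 * 'I_3 => bentry M a b p.1 p.2) _
    (Hb a b (bentry M a b q.1 q.2))).
have R0 := Hr i0; have R1 := Hr i1; have R2 := Hr i2.
have C0 := Hc i0; have C1 := Hc i1; have C2 := Hc i2.
rewrite !sum3E /= in R0 R1 R2 C0 C1 C2 Hd Ha.
rewrite rev0 rev1 rev2 in Ha.
have U : uniq [:: (bentry M a b i0 i0 : nat); (bentry M a b i0 i1 : nat); (bentry M a b i0 i2 : nat); (bentry M a b i1 i0 : nat); (bentry M a b i1 i1 : nat); (bentry M a b i1 i2 : nat); (bentry M a b i2 i0 : nat); (bentry M a b i2 i1 : nat); (bentry M a b i2 i2 : nat)].
have U0 : uniq (map (fun p : 'I_3 * 'I_3 => (bentry M a b p.1 p.2 : nat))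
   [:: (i0, i0); (i0, i1); (i0, i2); (i1, i0); (i1, i1); (i1, i2);
       (i2, i0); (i2, i1); (i2, i2)]).
  rewrite map_inj_uniq; last by move=> p q /ord_inj /inj.
  rewrite -(map_inj_uniq (f := fun p : 'I_3 * 'I_3 => 3 * p.1 + p.2)).
    by rewrite /= vi0 vi1 vi2.
  move=> [p1 p2] [q1 q2] /= h.
  have := ltn_ord p2; have := ltn_ord q2 => hq hp.
  have e1 : p1 = q1 by apply: ord_inj; lia.
  have e2 : p2 = q2 by apply: ord_inj; lia.
  by rewrite e1 e2.
exact: U0.
have E02 := negP _ _ _ R0; have E12 := negP _ _ _ R1; have E20 := negP _ _ _ C0.
have E21 := negP _ _ _ C1; have E22 := negP _ _ _ C2.
have := blk_check.
move/allP/(_ _ (mem9 (bentry M a b i0 i0)))/allP/(_ _ (mem9 (bentry M a b i0 i1))).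
move/allP/(_ _ (mem9 (bentry M a b i1 i0)))/allP/(_ _ (mem9 (bentry M a b i1 i1))).
rewrite /blk_pred -E02 -E12 -E20 -E21 -E22 /blk_impl U R2 Hd Ha /=.
rewrite /blk_ok /offdiag /rl /gl /center /in036 /in036n.
case/and5P => -> -> -> -> /=.
case: ifP => _ /and3P [h1 h2 h3].
  by exists (lab (bentry M a b i1 i1) (bentry M a b i0 i2)); rewrite lab_lt3 h1 h2 (pmatchP _ _ _ _ h3).
by exists (lab (bentry M a b i1 i1) (bentry M a b i0 i0)); rewrite lab_lt3 h1 h2 (pmatchP _ _ _ _ h3).
Qed.

Lemma posU (b b' : 'I_3) (f : 'I_3 * 'I_3 -> nat) : injective f -> b != b' ->
  uniq [:: f (b, i0); f (b, i1); f (b, i2); f (b', i0); f (b', i1); f (b', i2)].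
Proof.
move=> finj bb.
have U0 : uniq (map f [:: (b, i0); (b, i1); (b, i2); (b', i0); (b', i1); (b', i2)]).
  rewrite map_inj_uniq //.
  rewrite -(map_inj_uniq (f := fun p : 'I_3 * 'I_3 => 3 * p.1 + p.2)).
    by rewrite /= vi0 vi1 vi2; exact: uniq6.
  move=> [p1 p2] [q1 q2] /= h.
  have := ltn_ord p2; have := ltn_ord q2 => hq hp.
  have e1 : p1 = q1 by apply: ord_inj; lia.
  have e2 : p2 = q2 by apply: ord_inj; lia.
  by rewrite e1 e2.
exact: U0.
Qed.

Lemma rowP M a b b' : is_modular_magic M -> rl M a b = rl M a b'.
Proof.
move=> HM; case: (eqVneq b b') => [-> // | bb].
have [d [c1 /andP [n1 _] _ _ _]] := blockP M a b HM.
have [d' [c1' /andP [n1' _] _ _ _]] := blockP M a b' HM.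
move: (HM) => [[Hrow _] /(_ a b) [Hr _]].
move: (HM) => [_ /(_ a b') [Hr' _]].
have R := Hr i1; have R' := Hr' i1.
rewrite !sum3E /= in R R'.
have E := negP _ _ _ R; have E' := negP _ _ _ R'.
set r := gidx a i1.
have inj : injective (fun p : 'I_3 * 'I_3 => (M r (gidx p.1 p.2) : nat)).
  move=> [p1 p2] [q1 q2] /= /ord_inj h.
  have [] := gidx_inj _ _ _ _ (@card1_inj _ (M r) _ (Hrow r (M r (gidx q1 q2))) _ _ h erefl).
  by move=> -> ->.
have U := posU b b' _ inj bb.
have := row_check.
move/allP/(_ _ (mem9 (bentry M a b i1 i0)))/allP/(_ _ (mem9 (bentry M a b i1 i1))).
move/allP/(_ _ (mem9 (bentry M a b' i1 i0)))/allP/(_ _ (mem9 (bentry M a b' i1 i1))).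
rewrite /row_pred /in036n -E -E'; rewrite /in036 /center in c1 c1' n1 n1'.
rewrite c1 c1' n1 n1' U /= => /eqP.
by rewrite /rl.
Qed.

Lemma colP M a a' b : is_modular_magic M -> gl M a b = gl M a' b.
Proof.
move=> HM; case: (eqVneq a a') => [-> // | aa].
have [d [c1 /andP [_ n1] _ _ _]] := blockP M a b HM.
have [d' [c1' /andP [_ n1'] _ _ _]] := blockP M a' b HM.
move: (HM) => [[_ [Hcol _]] /(_ a b) [_ [Hc _]]].
move: (HM) => [_ /(_ a' b) [_ [Hc' _]]].
have R := Hc i1; have R' := Hc' i1.
rewrite !sum3E /= in R R'.
have E := negP _ _ _ R; have E' := negP _ _ _ R'.
set c := gidx b i1.
have inj : injective (fun p : 'I_3 * 'I_3 => (M (gidx p.1 p.2) c : nat)).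
  move=> [p1 p2] [q1 q2] /= /ord_inj h.
  have [] := gidx_inj _ _ _ _ (@card1_inj _ (fun r => M r c) _ (Hcol c (M (gidx q1 q2) c)) _ _ h erefl).
  by move=> -> ->.
have U := posU a a' _ inj aa.
have := row_check.
move/allP/(_ _ (mem9 (bentry M a b i0 i1)))/allP/(_ _ (mem9 (bentry M a b i1 i1))).
move/allP/(_ _ (mem9 (bentry M a' b i0 i1)))/allP/(_ _ (mem9 (bentry M a' b i1 i1))).
rewrite /row_pred /in036n -E -E'; rewrite /in036 /center in c1 c1' n1 n1'.
rewrite c1 c1' n1 n1' U /= => /eqP.
by rewrite /gl.
Qed.

Lemma rgP M a b : is_modular_magic M -> rl M a b != gl M a b.
Proof. by move=> HM; have [d [_ _ h _ _]] := blockP M a b HM. Qed.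

Theorem lemma2p1 (M : board) :
  is_modular_magic M ->
  forall j : 'I_9, in036 j ->
  forall B1 B2 B3 : 'I_3 * 'I_3,
    B1 != B2 -> B1 != B3 -> B2 != B3 ->
    center M B1.1 B1.2 = j -> center M B2.1 B2.2 = j -> center M B3.1 B3.2 = j ->
    offdiag M B1.1 B1.2 = offdiag M B2.1 B2.2 \/
    offdiag M B1.1 B1.2 = offdiag M B3.1 B3.2 \/
    offdiag M B2.1 B2.2 = offdiag M B3.1 B3.2.
Proof.
move=> HM j _ [a1 b1] [a2 b2] [a3 b3] _ _ _ /= C1 C2 C3.
have [d1 [_ _ _ /and3P [d1l dr1 dg1] O1]] := blockP M a1 b1 HM.
have [d2 [_ _ _ /and3P [d2l dr2 dg2] O2]] := blockP M a2 b2 HM.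
have [d3 [_ _ _ /and3P [d3l dr3 dg3] O3]] := blockP M a3 b3 HM.
have X : forall ai bi aj bj, rl M ai bi != gl M aj bj.
  move=> ai bi aj bj.
  rewrite (rowP M ai bi bj HM) -(colP M ai aj bj HM); exact: rgP.
have := final_check.
move/allP/(_ _ (mem3 (rl M a1 b1) (lab_lt3 _ _)))/allP/(_ _ (mem3 (rl M a2 b2) (lab_lt3 _ _))).
move/allP/(_ _ (mem3 (rl M a3 b3) (lab_lt3 _ _))).
move/allP/(_ _ (mem3 (gl M a1 b1) (lab_lt3 _ _)))/allP/(_ _ (mem3 (gl M a2 b2) (lab_lt3 _ _))).
move/allP/(_ _ (mem3 (gl M a3 b3) (lab_lt3 _ _))).
move/allP/(_ _ (mem3 _ d1l))/allP/(_ _ (mem3 _ d2l))/allP/(_ _ (mem3 _ d3l)).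
rewrite /fin_pred.
rewrite !X dr1 dg1 dr2 dg2 dr3 dg3 /=.
rewrite O1 O2 O3 C1 C2 C3.
by case/or3P => /eqP ->; auto.
Qed.
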